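(* Let $n,k\in\mathbb Z$, $\widetilde w(s,t)=w(1-s-t,t)^{-1}$ and $\breve w(s,t)=w(s,1-s-t)^{-1}$. Then: (1) if $0\le k\le n$, $\binom nk_w=\binom nk_w$; (2) if $n<0\le k$, $\binom nk_w=(-1)^k\binom{k-n-1}{k}_{\breve w}\prod_{j=1}^kW(j,-j)$; (3) if $k\le n<0$, $\binom nk_w=(-1)^{n-k}\binom{-k-1}{-n-1}_{\widetilde w}\prod_{j=1}^{n-k}W(n+1-j,j)^{-1}$; (4) if $0\le n<k$, $\binom nk_w=0$; (5) if $n<k<0$, $\binom nk_w=0$; (6) if $k<0\le n$, $\binom nk_w=0$.
   Context: $(w(s,t))_{s,t\in\mathbb Z}$ are commuting invertible variables. Product convention: $\prod_{j=l}^m A_j=A_l\cdots A_m$ if $m>l-1$, $=1$ if $m=l-1$, $=A_{l-1}^{-1}\cdots A_{m+1}^{-1}$ if $m<l-1$. For any weight family $v$, $W_v(s,t)=\prod_{j=1}^t v(s,j)$ (and $W=W_w$), and $\binom{n}{k}_v$ ($n,k\in\mathbb Z$) is the unique family with $\binom{n}{0}_v=\binom{n}{n}_v=1$ for all $n$ and $\binom{n+1}{k}_v=\binom{n}{k}_v+\binom{n}{k-1}_vW_v(k,n+1-k)$ whenever $(n+1,k)\ne(0,0)$. *)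

(* Defs.v *)
From HB Require Import structures.
From mathcomp Require Import all_boot all_order all_algebra.
Set Implicit Arguments. Unset Strict Implicit. Unset Printing Implicit Defensive.
Import Order.TTheory GRing.Theory Num.Theory.
Local Open Scope ring_scope.

(* Generalized product  prod_{j=l}^m A_j  over integer bounds:
   A_l ... A_m            if m > l-1,
   1                      if m = l-1,
   A_{l-1}^-1 ... A_{m+1}^-1  if m < l-1. *)
Definition iprod (R : comUnitRingType) (A : int -> R) (l m : int) : R :=
  if (l - 1 <= m)%R then \prod_(0 <= i < absz (m - l + 1)%R) A (l + i%:Z)
  else \prod_(0 <= i < absz (l - 1 - m)%R) (A (l - 1 - i%:Z))^-1.

Definition Wv (R : comUnitRingType) (v : int -> int -> R) (s t : int) : R :=
  iprod (fun j => v s j) 1 t.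

Definition is_wbinom (R : comUnitRingType) (v : int -> int -> R)
    (B : int -> int -> R) : Prop :=
  [/\ (forall n : int, B n 0 = 1),
      (forall n : int, B n n = 1) &
      (forall n k : int, (n + 1, k) <> (0, 0) ->
         B (n + 1) k = B n k + B n (k - 1) * Wv v k (n + 1 - k))].

Definition wtilde (R : comUnitRingType) (w : int -> int -> R) : int -> int -> R :=
  fun s t => (w (1 - s - t) t)^-1.
Definition wbreve (R : comUnitRingType) (w : int -> int -> R) : int -> int -> R :=
  fun s t => (w s (1 - s - t))^-1.

(* Main.v *)
Require Import Defs.
From HB Require Import structures.
From mathcomp Require Import all_boot all_order all_algebra zify ring.
Import Order.TTheory GRing.Theory Num.Theory.
Local Open Scope ring_scope.
Set Implicit Arguments. Unset Strict Implicit. Unset Printing Implicit Defensive.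

Lemma iprod_ext (R : comUnitRingType) (A A' : int -> R) l m :
  (forall j, A j = A' j) -> iprod A l m = iprod A' l m.
Proof.
move=> h; rewrite /iprod; case: ifP => _; apply: eq_bigr => i _; by rewrite h.
Qed.

Lemma iprod0 (R : comUnitRingType) (A : int -> R) l : iprod A l (l - 1) = 1.
Proof.
rewrite /iprod lexx. have -> : l - 1 - l + 1 = 0 by ring. by rewrite big_geq.
Qed.

Lemma iprodS (R : comUnitRingType) (A : int -> R) l m :
  A (m + 1) \is a GRing.unit -> iprod A l (m + 1) = iprod A l m * A (m + 1).
Proof.
move=> hu; rewrite /iprod.
case: (lerP (l - 1) m) => h.
  have [N hN] : exists N : nat, m - l + 1 = N%:Z by exists (absz (m - l + 1)%R); lia.
  have -> : (l - 1 <= m + 1) = true by lia.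
  have -> : m + 1 - l + 1 = N.+1%:Z by lia.
  rewrite hN /= big_nat_recr //=; congr (_ * A _); lia.
have [N hN] : exists N : nat, l - 1 - m = N.+1%:Z by exists (absz (l - 1 - m)%R).-1; lia.
rewrite hN /= big_nat_recr //=.
have -> : l - 1 - N%:Z = m + 1 by lia.
rewrite mulrVK //.
case: N hN => [|N] hN.
  have -> : (l - 1 <= m + 1) = true by lia.
  have -> : m + 1 - l + 1 = 0 by lia.
  by rewrite !big_geq.
have -> : (l - 1 <= m + 1) = false by lia.
have -> : l - 1 - (m + 1) = N.+1%:Z by lia.
by [].
Qed.

Lemma iprod10 (R : comUnitRingType) (A : int -> R) : iprod A 1 0 = 1.
Proof. by have := iprod0 A 1; rewrite subrr. Qed.

Lemma iprod_unit (R : comUnitRingType) (A : int -> R) l m :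
  (forall j, A j \is a GRing.unit) -> iprod A l m \is a GRing.unit.
Proof.
move=> h; rewrite /iprod; case: ifP => _;
  apply: (big_ind (fun x => x \is a GRing.unit)); try exact: unitr1;
  try (by move=> x y hx hy; rewrite unitrMl);
  move=> i _; by rewrite ?unitrV h.
Qed.

Lemma Wv_unit (R : comUnitRingType) (v : int -> int -> R) s t :
  (forall s t, v s t \is a GRing.unit) -> Wv v s t \is a GRing.unit.
Proof. move=> h; exact: iprod_unit. Qed.

Lemma Wv0 (R : comUnitRingType) (v : int -> int -> R) s : Wv v s 0 = 1.
Proof. exact: iprod10. Qed.

Lemma WvS (R : comUnitRingType) (v : int -> int -> R) s m :
  v s (m + 1) \is a GRing.unit -> Wv v s (m + 1) = Wv v s m * v s (m + 1).
Proof. move=> h; rewrite /Wv; exact: (@iprodS R (fun j => v s j) 1 m h). Qed.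

Lemma zero_up (R : comUnitRingType) (v : int -> int -> R) (B : int -> int -> R)
  (hv : forall s t, v s t \is a GRing.unit) (hB : is_wbinom v B) :
  forall (d : nat) (n : int), (0 <= n \/ n + d.+1%:Z < 0) -> B n (n + d.+1%:Z) = 0.
Proof.
case: hB => h0 hd hr.
elim=> [|d IH] n hn.
  have e1 := hr n (n + 1) ltac:(move=> E; inversion E; lia).
  rewrite hd subrr Wv0 addrK hd mulr1 in e1.
  have -> : n + 1%:Z = n + 1 by [].
  have : B n (n + 1) = (B n (n + 1) + 1) - 1 by rewrite addrK.
  by rewrite -e1 subrr.
have e1 := hr n (n + d.+2%:Z) ltac:(move=> E; inversion E; lia).
rewrite (_ : n + d.+2%:Z - 1 = n + d.+1%:Z) in e1; last lia.
have z1 : B (n + 1) (n + d.+2%:Z) = 0.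
  by rewrite (_ : n + d.+2%:Z = (n + 1) + d.+1%:Z); [apply: IH; lia | lia].
rewrite z1 in e1.
rewrite (IH n) in e1; last lia.
rewrite mul0r addr0 in e1.
by rewrite -e1.
Qed.

Lemma zero_left (R : comUnitRingType) (v : int -> int -> R) (B : int -> int -> R)
  (hv : forall s t, v s t \is a GRing.unit) (hB : is_wbinom v B) :
  forall (j : nat) (n : int), 0 <= n -> B n (- j%:Z - 1) = 0.
Proof.
case: hB => h0 hd hr.
elim=> [|j IH] n hn.
  have e1 := hr n 0 ltac:(move=> E; inversion E; lia).
  rewrite !h0 in e1.
  have e2 : B n (0 - 1) * Wv v 0 (n + 1 - 0) = 0 * Wv v 0 (n + 1 - 0).
    rewrite mul0r; apply: (addrI 1); rewrite [RHS]addr0; exact: (esym e1).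
  have := mulIr (Wv_unit _ _ hv) e2.
  by rewrite (_ : - 0%:Z - 1 = 0 - 1); last lia.
have e1 := hr n (- j%:Z - 1) ltac:(move=> E; inversion E; lia).
rewrite (IH (n + 1)) in e1; last lia.
rewrite (IH n hn) add0r in e1.
have e2 : B n (- j%:Z - 1 - 1) * Wv v (- j%:Z - 1) (n + 1 - (- j%:Z - 1)) =
          0 * Wv v (- j%:Z - 1) (n + 1 - (- j%:Z - 1)) by rewrite mul0r.
have := mulIr (Wv_unit _ _ hv) e2.
by rewrite (_ : - j.+1%:Z - 1 = - j%:Z - 1 - 1); last lia.
Qed.

Lemma key2 (R : comUnitRingType) (w : int -> int -> R)
  (hw : forall s t : int, w s t \is a GRing.unit) s (N : nat) :
  Wv w s (- s) * Wv (wbreve w) s N%:Z = Wv w s (- N%:Z - s).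
Proof.
elim: N => [|N IH].
  by rewrite Wv0 mulr1; congr (Wv w s _); lia.
rewrite (_ : N.+1%:Z = N%:Z + 1); last lia.
rewrite WvS; last by rewrite /wbreve unitrV.
rewrite mulrA IH /wbreve.
rewrite (_ : - N%:Z - s = (- (N%:Z + 1) - s) + 1); last lia.
rewrite WvS // (_ : 1 - s - (N%:Z + 1) = - (N%:Z + 1) - s + 1); last lia.
by rewrite mulrK.
Qed.

Definition Cf (R : comUnitRingType) (w Bb : int -> int -> R) (n k : int) : R :=
  (-1) ^+ absz k * Bb (k - n - 1) k * iprod (fun j => Wv w j (- j)) 1 k.

Lemma C_rec (R : comUnitRingType) (w Bb : int -> int -> R)
  (hw : forall s t : int, w s t \is a GRing.unit)
  (hBb : is_wbinom (wbreve w) Bb) (n k : int) :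
  0 <= k -> n <= -1 ->
  Cf w Bb n (k + 1) = Cf w Bb (n + 1) (k + 1) - Cf w Bb n k * Wv w (k + 1) (n - k).
Proof.
move=> hk hn.
have [K hK] : exists K : nat, k = K%:Z by exists (absz k); lia.
have [N hN] : exists N : nat, n = - N%:Z - 1 by exists (absz (- n - 1)%R); lia.
case: hBb => _ _ hr.
have e1 := hr (k - n - 1) (k + 1) ltac:(move=> E; inversion E; lia).
rewrite (_ : k + 1 - 1 = k) in e1; last lia.
rewrite (_ : k - n - 1 + 1 - (k + 1) = N%:Z) in e1; last lia.
rewrite (_ : k - n - 1 + 1 = k + 1 - n - 1) in e1; last lia.
rewrite /Cf e1 (_ : k + 1 - (n + 1) - 1 = k - n - 1); last lia.
rewrite (_ : n - k = - N%:Z - (k + 1)); last lia.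
rewrite -key2 //.
rewrite /iprod (_ : (1 - 1 <= k + 1) = true); last lia.
rewrite (_ : (1 - 1 <= k) = true); last lia.
rewrite (_ : k + 1 - 1 + 1 = (K.+1)%:Z); last lia.
rewrite (_ : k - 1 + 1 = K%:Z); last lia.
rewrite hK (_ : absz (K%:Z + 1) = K.+1); last lia.
rewrite /= big_nat_recr //= (_ : 1 + K%:Z = K%:Z + 1); last lia.
rewrite exprS.
ring.
Qed.

Lemma FG (R : comUnitRingType) (w : int -> int -> R)
  (hw : forall s t : int, w s t \is a GRing.unit) (a : int) (L : nat) :
  iprod (fun j => (Wv w (a - j) j)^-1) 1 L%:Z *
  iprod (fun j => (w (a + 1 - j) j)^-1) 1 (L%:Z + 1) =
  iprod (fun j => (Wv w (a + 1 - j) j)^-1) 1 (L%:Z + 1).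
Proof.
have hWu : forall s t, (Wv w s t)^-1 \is a GRing.unit.
  by move=> s t; rewrite unitrV; apply: Wv_unit.
have hwu : forall s t, (w s t)^-1 \is a GRing.unit by move=> s t; rewrite unitrV.
elim: L => [|L IH].
  rewrite (@iprodS _ (fun j => (w (a + 1 - j) j)^-1)) //.
  rewrite (@iprodS _ (fun j => (Wv w (a + 1 - j) j)^-1)) //.
  rewrite !iprod10 /= WvS // Wv0.
  by rewrite !mul1r.
rewrite (_ : (L.+1)%:Z = L%:Z + 1); last lia.
rewrite (@iprodS _ (fun j => (Wv w (a - j) j)^-1)) //.
rewrite (@iprodS _ (fun j => (w (a + 1 - j) j)^-1) 1 (L%:Z + 1)) //.
rewrite (@iprodS _ (fun j => (Wv w (a + 1 - j) j)^-1) 1 (L%:Z + 1)) //.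
rewrite -IH /=.
rewrite (_ : a + 1 - (L%:Z + 1 + 1) = a - (L%:Z + 1)); last lia.
rewrite (@WvS _ w _ (L%:Z + 1)) // invrM //; last exact: Wv_unit.
ring.
Qed.

Definition Df (R : comUnitRingType) (w Bt : int -> int -> R) (n k : int) : R :=
  (-1) ^+ absz (n - k) * Bt (- k - 1) (- n - 1)
    * iprod (fun j => (Wv w (n + 1 - j) j)^-1) 1 (n - k).

Lemma D_rec (R : comUnitRingType) (w Bt : int -> int -> R)
  (hw : forall s t : int, w s t \is a GRing.unit)
  (hBt : is_wbinom (wtilde w) Bt) (n k : int) :
  k <= n -> n <= -1 ->
  Df w Bt n (k - 1) * Wv w k (n + 1 - k) = Df w Bt (n + 1) k - Df w Bt n k.
Proof.
move=> hk hn.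
have [d hd] : exists d : nat, n - k = d%:Z by exists (absz (n - k)%R); lia.
case: hBt => _ _ hr.
have e1 := hr (- k - 1) (- n - 1) ltac:(move=> E; inversion E; lia).
rewrite (_ : - k - 1 + 1 - (- n - 1) = d%:Z + 1) in e1; last lia.
rewrite (_ : - n - 1 - 1 = - (n + 1) - 1) in e1; last lia.
rewrite (_ : - k - 1 + 1 = - (k - 1) - 1) in e1; last lia.
have hT : Wv (wtilde w) (- n - 1) (d%:Z + 1) =
          iprod (fun j => (w (n + 1 + 1 - j) j)^-1) 1 (d%:Z + 1).
  by apply: iprod_ext => j; rewrite /wtilde; congr (w _ _)^-1; lia.
rewrite /Df e1 hT.
rewrite (_ : n - (k - 1) = d%:Z + 1); last lia.
rewrite (_ : n + 1 - k = d%:Z + 1); last lia.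
rewrite hd (_ : absz (d%:Z + 1) = d.+1); last lia.
rewrite -(FG hw (n + 1) d).
rewrite (@iprodS _ (fun j => (Wv w (n + 1 - j) j)^-1)) /=; last by rewrite unitrV; apply: Wv_unit.
rewrite (_ : n + 1 - (d%:Z + 1) = k); last lia.
have -> : forall (a b q z u : R), a * b * (q * z) * u = a * b * q * (z * u) by move=> *; ring.
rewrite mulVr; last exact: Wv_unit.
rewrite exprS; ring.
Qed.

Lemma step2 (R : comUnitRingType) (w B Bb : int -> int -> R)
  (hw : forall s t : int, w s t \is a GRing.unit)
  (hB : is_wbinom w B) (hBb : is_wbinom (wbreve w) Bb) (n K : int) :
  0 <= K -> n <= -1 -> B n K = Cf w Bb n K ->
  B (n + 1) (K + 1) = Cf w Bb (n + 1) (K + 1) -> B n (K + 1) = Cf w Bb n (K + 1).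
Proof.
move=> hK hn h1 h2.
case: hB => _ _ hr.
have e1 := hr n (K + 1) ltac:(move=> E; inversion E; lia).
rewrite (_ : K + 1 - 1 = K) in e1; last lia.
rewrite (_ : n + 1 - (K + 1) = n - K) in e1; last lia.
have -> : B n (K + 1) = B (n + 1) (K + 1) - B n K * Wv w (K + 1) (n - K).
  by rewrite e1 addrK.
by rewrite (C_rec hw hBb) // h1 h2.
Qed.

Lemma step3 (R : comUnitRingType) (w B Bt : int -> int -> R)
  (hw : forall s t : int, w s t \is a GRing.unit)
  (hB : is_wbinom w B) (hBt : is_wbinom (wtilde w) Bt) (n k : int) :
  k <= n -> n <= -1 -> B n k = Df w Bt n k ->
  B (n + 1) k = Df w Bt (n + 1) k -> B n (k - 1) = Df w Bt n (k - 1).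
Proof.
move=> hk hn h1 h2.
case: hB => _ _ hr.
have e1 := hr n k ltac:(move=> E; inversion E; lia).
apply: (mulIr (Wv_unit k (n + 1 - k) hw)).
rewrite /= (D_rec hw hBt) // -h1 -h2 e1.
ring.
Qed.

Lemma part2 (R : comUnitRingType) (w B Bb : int -> int -> R)
  (hw : forall s t : int, w s t \is a GRing.unit)
  (hB : is_wbinom w B) (hBb : is_wbinom (wbreve w) Bb) :
  forall K e : nat, B (- e%:Z - 1) K%:Z = Cf w Bb (- e%:Z - 1) K%:Z.
Proof.
have hwb : forall s t, wbreve w s t \is a GRing.unit by move=> s t; rewrite /wbreve unitrV.
have hB' := hB; have hBb' := hBb.
case: hB' => h0 _ _; case: hBb' => h0b _ _.
elim=> [|K IH] e.
  by rewrite h0 /Cf /= h0b iprod10 expr0 !mul1r.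
rewrite (_ : K.+1%:Z = K%:Z + 1); last lia.
elim: e => [|e IHe].
  apply: (step2 hw hB hBb) => //.
  rewrite (_ : - 0%:Z - 1 + 1 = 0); last lia.
  have z1 := @zero_up _ _ _ hw hB K 0 ltac:(left; lia).
  rewrite add0r (_ : K.+1%:Z = K%:Z + 1) in z1; last lia.
  rewrite z1 /Cf (_ : K%:Z + 1 - 0 - 1 = K%:Z); last lia.
  have z2 := @zero_up _ _ _ hwb hBb 0 K ltac:(left; lia).
  rewrite (_ : K%:Z + 0.+1%:Z = K%:Z + 1) in z2; last lia.
  by rewrite z2 mulr0 mul0r.
apply: (step2 hw hB hBb) => //.
by rewrite (_ : - e.+1%:Z - 1 + 1 = - e%:Z - 1); last lia.
Qed.

Lemma part3 (R : comUnitRingType) (w B Bt : int -> int -> R)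
  (hw : forall s t : int, w s t \is a GRing.unit)
  (hB : is_wbinom w B) (hBt : is_wbinom (wtilde w) Bt) :
  forall d e : nat, B (- e%:Z - 1) (- e%:Z - 1 - d%:Z) = Df w Bt (- e%:Z - 1) (- e%:Z - 1 - d%:Z).
Proof.
have hwt : forall s t, wtilde w s t \is a GRing.unit by move=> s t; rewrite /wtilde unitrV.
have hB' := hB; have hBt' := hBt.
case: hB' => h0 hd _; case: hBt' => h0t hdt _.
elim=> [|d IH] e.
  by rewrite subr0 hd /Df subrr /= hdt iprod10 expr0 !mul1r.
rewrite (_ : - e%:Z - 1 - d.+1%:Z = (- e%:Z - 1 - d%:Z) - 1); last lia.
elim: e => [|e IHe].
  apply: (step3 hw hB hBt) => //; try lia.
  rewrite (_ : - 0%:Z - 1 + 1 = 0); last lia.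
  rewrite (_ : - 0%:Z - 1 - d%:Z = - d%:Z - 1); last lia.
  rewrite (@zero_left _ _ _ hw hB d 0 (lexx 0)) /Df.
  rewrite (_ : - (- d%:Z - 1) - 1 = d%:Z); last lia.
  rewrite (_ : - (0:int) - 1 = - (0%N)%:Z - 1) //.
  by rewrite (@zero_left _ _ _ hwt hBt 0 d ltac:(lia)) mulr0 mul0r.
apply: (step3 hw hB hBt) => //; try lia.
rewrite (_ : - e.+1%:Z - 1 + 1 = - e%:Z - 1); last lia.
rewrite (_ : - e.+1%:Z - 1 - d%:Z = - e%:Z - 1 - d%:Z - 1); last lia.
exact: IHe.
Qed.

Theorem proposition1 (R : comUnitRingType) (w : int -> int -> R)
  (hw : forall s t : int, w s t \is a GRing.unit)
  (B Bt Bb : int -> int -> R)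
  (hB : is_wbinom w B) (hBt : is_wbinom (wtilde w) Bt)
  (hBb : is_wbinom (wbreve w) Bb) (n k : int) :
    (0 <= k <= n -> B n k = B n k) /\
      (n < 0 <= k -> B n k = (-1) ^+ absz k * Bb (k - n - 1) k
                              * iprod (fun j => Wv w j (- j)) 1 k) /\
      (k <= n < 0 -> B n k = (-1) ^+ absz (n - k)%R * Bt (- k - 1) (- n - 1)
                              * iprod (fun j => (Wv w (n + 1 - j) j)^-1) 1 (n - k)) /\
      (0 <= n < k -> B n k = 0) /\
      (n < k < 0 -> B n k = 0) /\
      (k < 0 <= n -> B n k = 0).
Proof.
split; first by [].
split.
  move=> /andP [hn hk].
  have [K ->] : exists K : nat, k = K%:Z by exists (absz k); lia.
  have [e ->] : exists e : nat, n = - e%:Z - 1 by exists (absz (- n - 1)%R); lia.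
  exact: (part2 hw hB hBb).
split.
  move=> /andP [hk hn].
  have [e he] : exists e : nat, n = - e%:Z - 1 by exists (absz (- n - 1)%R); lia.
  have [d ->] : exists d : nat, k = - e%:Z - 1 - d%:Z by exists (absz (n - k)%R); lia.
  rewrite he; exact: (part3 hw hB hBt).
split.
  move=> /andP [hn hk].
  have [d ->] : exists d : nat, k = n + d.+1%:Z by exists (absz (k - n - 1)%R); lia.
  by apply: (zero_up hw hB); left.
split.
  move=> /andP [hn hk].
  have [d hd] : exists d : nat, k = n + d.+1%:Z by exists (absz (k - n - 1)%R); lia.
  by rewrite hd; apply: (@zero_up _ _ _ hw hB d n); right; lia.
move=> /andP [hk hn].
have [j ->] : exists j : nat, k = - j%:Z - 1 by exists (absz (- k - 1)%R); lia.
exact: (zero_left hw hB).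
Qed.
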